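(* Fix an integer $k\ge1$. Let $G$ be the directed graph with vertices $v_{i,p}$ for $i\in\{1,2,3,\dots\}$ and $p\in\{1,\dots,k\}$, with an edge from $v_{i,p}$ to $v_{j,q}$ if and only if $j=i+1$ and $|p-q|\le1$, and with birthdates $t(v_{i,p})=i$. Then $(G,t)$ is an infinite biosphere, and $G$ has exactly $k$ distinct $\mathrm{IAP}\cap\mathrm{CONV}\cap\mathrm{CA}\cap\mathrm{REF}$-maximal sets, namely the sets $S_\ell=\{v_{1,\ell}\}\cup\{w: w \text{ is a descendant of } v_{1,\ell}\}$ for $\ell\in\{1,\dots,k\}$. Moreover $S_\ell\sim S_m$ for all $\ell,m\in\{1,\dots,k\}$.
   Context: An infinite biosphere is a directed graph $G$ together with a function $t$ assigning a real number $t(v)$ to each vertex, such that: (1) if $v$ is a parent of $w$ (edge from $v$ to $w$) then $t(v)<t(w)$; (2) for every $r\in\mathbb R$ at most finitely many vertices $v$ have $t(v)<r$; (3) every vertex has finitely many children; (4) $G$ is infinite. $v$ is an ancestor of $w$ (and $w$ a descendant of $v$) if there is a directed path $v=v_1,\dots,v_n=w$ with $n>1$. $\mathrm{IAP}$: sets $S$ of vertices such that no $v\in S$ has both infinitely many descendants in $S$ and infinitely many non-descendants in $S$. $\mathrm{CONV}$: sets $S$ such that every vertex having an ancestor in $S$ and a descendant in $S$ lies in $S$. $\mathrm{CA}$: sets $S$ for which there exists $v\in S$ such that every $w\in S$ with $w\neq v$ is a descendant of $v$. $\mathrm{REF}$: sets $S$ such that every $v\in S$ with infinitely many descendants in $G$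 has infinitely many descendants in $S$. An $\mathrm{IAP}\cap\mathrm{CONV}\cap\mathrm{CA}\cap\mathrm{REF}$-maximal set is a nonempty set in $\mathrm{IAP}\cap\mathrm{CONV}\cap\mathrm{CA}\cap\mathrm{REF}$ no proper superset of which lies in $\mathrm{IAP}\cap\mathrm{CONV}\cap\mathrm{CA}\cap\mathrm{REF}$. For $S\subseteq G$, a vertex $v\in S$ is a generator of $S$ if $S$ contains at most finitely many non-descendants of $v$; $\mathrm{gen}(S)$ is the set of generators. For infinite $S_1,S_2\subseteq G$, $S_1\sim S_2$ means the symmetric difference $\mathrm{gen}(S_1)\triangle\mathrm{gen}(S_2)$ is finite. *)

(* Defs.v *)
From Stdlib Require Import Reals ZArith List Relations Bool.
Import ListNotations.

Section Biosphere.
Variable V : Type.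
Variable E : V -> V -> Prop.   (* E v w : edge from v to w, i.e. v is a parent of w *)

Definition finite_set (S : V -> Prop) : Prop :=
  exists l : list V, forall v, S v -> In v l.
Definition infinite_set (S : V -> Prop) : Prop := ~ finite_set S.

Definition desc (v w : V) : Prop := clos_trans V E v w.

Definition infinite_biosphere (t : V -> R) : Prop :=
  (forall v w, E v w -> (t v < t w)%R) /\
  (forall r : R, finite_set (fun v => (t v < r)%R)) /\
  (forall v, finite_set (E v)) /\
  infinite_set (fun _ => True).

Definition IAP (S : V -> Prop) : Prop :=
  forall v, S v ->
    ~ (infinite_set (fun w => S w /\ desc v w) /\
       infinite_set (fun w => S w /\ ~ desc v w)).

Definition CONV (S : V -> Prop) : Prop :=
  forall u, (exists a, S a /\ desc a u) -> (exists d, S d /\ desc u d) -> S u.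

Definition CA (S : V -> Prop) : Prop :=
  exists v, S v /\ forall w, S w -> w <> v -> desc v w.

Definition REF (S : V -> Prop) : Prop :=
  forall v, S v -> infinite_set (desc v) -> infinite_set (fun w => S w /\ desc v w).

Definition ICCR (S : V -> Prop) : Prop := IAP S /\ CONV S /\ CA S /\ REF S.

Definition ICCR_maximal (S : V -> Prop) : Prop :=
  (exists v, S v) /\ ICCR S /\
  forall T, ICCR T -> (forall x, S x -> T x) -> forall x, T x -> S x.

Definition generator (S : V -> Prop) (v : V) : Prop :=
  S v /\ finite_set (fun w => S w /\ ~ desc v w).

Definition gen_equiv (S1 S2 : V -> Prop) : Prop :=
  infinite_set S1 /\ infinite_set S2 /\
  finite_set (fun v => (generator S1 v /\ ~ generator S2 v) \/
                       (generator S2 v /\ ~ generator S1 v)).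
End Biosphere.

Definition vtx (k : nat) : Type :=
  { ip : nat * nat | ((1 <=? fst ip) && (1 <=? snd ip) && (snd ip <=? k))%bool = true }.

Definition vedge (k : nat) (x y : vtx k) : Prop :=
  fst (proj1_sig y) = fst (proj1_sig x) + 1 /\
  (Z.abs (Z.of_nat (snd (proj1_sig x)) - Z.of_nat (snd (proj1_sig y))) <= 1)%Z.

Definition vbirth (k : nat) (x : vtx k) : R := INR (fst (proj1_sig x)).

Definition S_ell (k l : nat) (w : vtx k) : Prop :=
  exists x : vtx k, proj1_sig x = (1, l) /\ (w = x \/ desc (vtx k) (vedge k) x w).

(* Main.v *)
Require Import Defs.
From Stdlib Require Import Reals ZArith List Relations.
From Stdlib Require Import Lia Lra Bool Eqdep_dec Classical FunctionalExtensionality PropExtensionality.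
Import ListNotations.

Lemma vbounds k (x : vtx k) :
  1 <= fst (proj1_sig x) /\ 1 <= snd (proj1_sig x) /\ snd (proj1_sig x) <= k.
Proof.
  destruct x as [[i p] h]; cbn [proj1_sig fst snd] in *.
  apply andb_prop in h as [h h3]; apply andb_prop in h as [h1 h2].
  apply Nat.leb_le in h1, h2, h3. lia.
Qed.

Lemma vext k (x y : vtx k) : proj1_sig x = proj1_sig y -> x = y.
Proof.
  destruct x as [a ha], y as [b hb]; simpl; intros ->.
  f_equal. apply UIP_dec, bool_dec.
Qed.

Definition mkv k i p (h1 : 1 <= i) (h2 : 1 <= p) (h3 : p <= k) : vtx k.
Proof.
  refine (exist _ (i,p) _). cbn [fst snd].
  apply andb_true_intro; split; [apply andb_true_intro; split|]; apply (proj2 (Nat.leb_le _ _)); assumption.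
Defined.

Definition mkopt k (ip : nat*nat) : list (vtx k) :=
  match Sumbool.sumbool_of_bool ((1 <=? fst ip) && (1 <=? snd ip) && (snd ip <=? k)) with
  | left h => [exist _ ip h]
  | right _ => []
  end.

Definition vlist k N : list (vtx k) :=
  flat_map (mkopt k) (list_prod (seq 0 N) (seq 0 (S k))).

Lemma vlist_spec k N (x : vtx k) : fst (proj1_sig x) < N -> In x (vlist k N).
Proof.
  intro H. destruct (vbounds k x) as (?&?&?).
  unfold vlist. apply in_flat_map. exists (proj1_sig x). split.
  - destruct x as [[i p] h]; cbn [proj1_sig fst snd] in *. apply in_prod; apply (proj2 (in_seq _ _ _)); lia.
  - unfold mkopt. destruct (Sumbool.sumbool_of_bool _) as [h|h].
    + left. apply vext. reflexivity.
    + exfalso. destruct x as [ip h']; cbn [proj1_sig] in h. rewrite h' in h. discriminate.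
Qed.

Lemma finite_bound k (S : vtx k -> Prop) N :
  (forall v, S v -> fst (proj1_sig v) < N) -> finite_set (vtx k) S.
Proof. intro H. exists (vlist k N). intros v Sv. apply vlist_spec, H, Sv. Qed.

Lemma infinite_unb k (S : vtx k -> Prop) :
  (forall N, exists v, S v /\ N <= fst (proj1_sig v)) -> infinite_set (vtx k) S.
Proof.
  intros H [l Hl].
  set (M := fold_right (fun v acc => Nat.max (fst (proj1_sig v)) acc) 0 l).
  assert (HM : forall v, In v l -> fst (proj1_sig v) <= M).
  { subst M. clear. induction l; cbn [fold_right In]; intros v Hv; [contradiction|].
    destruct Hv as [->|Hv]; [lia| specialize (IHl v Hv); lia]. }
  clearbody M. destruct (H (Datatypes.S M)) as (v&Sv&Hv). specialize (HM v (Hl v Sv)). lia.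
Qed.

Lemma desc_lt k (x y : vtx k) :
  desc (vtx k) (vedge k) x y -> fst (proj1_sig x) < fst (proj1_sig y).
Proof. unfold desc. induction 1 as [x y [h _]|x y z _ IH1 _ IH2]; lia. Qed.

Lemma desc_suff k d : forall (x y : vtx k),
  fst (proj1_sig y) = fst (proj1_sig x) + S d ->
  (Z.abs (Z.of_nat (snd (proj1_sig x)) - Z.of_nat (snd (proj1_sig y))) <= Z.of_nat (S d))%Z ->
  desc (vtx k) (vedge k) x y.
Proof.
  induction d as [|d IH]; intros x y H1 H2.
  - apply t_step. split; lia.
  - destruct (vbounds k x) as (hx1&hx2&hx3). destruct (vbounds k y) as (hy1&hy2&hy3).
    assert (hi : 1 <= fst (proj1_sig x) + 1) by lia.
    destruct (lt_eq_lt_dec (snd (proj1_sig x)) (snd (proj1_sig y))) as [[hlt|heq]|hgt].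
    + assert (h2 : 1 <= snd (proj1_sig x) + 1) by lia.
      assert (h3 : snd (proj1_sig x) + 1 <= k) by lia.
      apply t_trans with (mkv k _ _ hi h2 h3).
      * apply t_step. split; cbn [mkv proj1_sig fst snd]; lia.
      * apply IH; cbn [mkv proj1_sig fst snd]; lia.
    + apply t_trans with (mkv k _ _ hi hx2 hx3).
      * apply t_step. split; cbn [mkv proj1_sig fst snd]; lia.
      * apply IH; cbn [mkv proj1_sig fst snd]; lia.
    + assert (h2 : 1 <= snd (proj1_sig x) - 1) by lia.
      assert (h3 : snd (proj1_sig x) - 1 <= k) by lia.
      apply t_trans with (mkv k _ _ hi h2 h3).
      * apply t_step. split; cbn [mkv proj1_sig fst snd]; lia.
      * apply IH; cbn [mkv proj1_sig fst snd]; lia.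
Qed.

Lemma desc_far k (v w : vtx k) :
  fst (proj1_sig v) + k <= fst (proj1_sig w) -> desc (vtx k) (vedge k) v w.
Proof.
  intro H. destruct (vbounds k v) as (?&?&?). destruct (vbounds k w) as (?&?&?).
  apply (desc_suff k (fst (proj1_sig w) - fst (proj1_sig v) - 1)); lia.
Qed.

Lemma gen_all k (S : vtx k -> Prop) v : S v -> generator (vtx k) (vedge k) S v.
Proof.
  intro Sv. split; [exact Sv|]. apply finite_bound with (fst (proj1_sig v) + k).
  intros w [_ Hw]. destruct (le_lt_dec (fst (proj1_sig v) + k) (fst (proj1_sig w))); [|auto].
  exfalso; apply Hw; apply desc_far; auto.
Qed.

Lemma IAP_all k (S : vtx k -> Prop) : IAP (vtx k) (vedge k) S.
Proof. intros v Sv [_ Hinf]. apply Hinf. exact (proj2 (gen_all k S v Sv)). Qed.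

Lemma S_ell_root k l (x : vtx k) : proj1_sig x = (1,l) ->
  forall w, S_ell k l w <-> (w = x \/ desc (vtx k) (vedge k) x w).
Proof.
  intros Hx w; split.
  - intros [x' [Hx' H]]. assert (x' = x) by (apply vext; congruence). subst; auto.
  - intro H. exists x. auto.
Qed.

Lemma no_desc_first k l (x y : vtx k) : proj1_sig x = (1,l) -> ~ desc (vtx k) (vedge k) y x.
Proof.
  intros Hx d. apply desc_lt in d. destruct (vbounds k y) as (?&?&?). rewrite Hx in d. cbn [fst] in d. lia.
Qed.

Lemma S_ell_ICCR k l (hl : 1 <= l <= k) : ICCR (vtx k) (vedge k) (S_ell k l).
Proof.
  assert (h1 : 1 <= 1) by lia. destruct hl as [h2 h3].
  pose proof (S_ell_root k l (mkv k 1 l h1 h2 h3) eq_refl) as R.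
  set (x := mkv k 1 l h1 h2 h3) in *. unfold desc in R.
  split; [apply IAP_all|]. split; [|split].
  - intros u [a [Sa Ha]] _. apply R. right. apply R in Sa. unfold desc in *.
    destruct Sa as [->|Sa]; [exact Ha| eapply t_trans; eauto].
  - exists x; split; [apply R; left; auto|]. intros w Sw hne; apply R in Sw; destruct Sw; [contradiction|auto].
  - intros v Sv Hinf [l' Hl']. apply Hinf. exists l'. intros w Hw. apply Hl'. split; [|auto].
    apply R. right. apply R in Sv. unfold desc in *. destruct Sv as [->|Sv]; [auto| eapply t_trans; eauto].
Qed.

Theorem mainTheorem13 (k : nat) (hk : 1 <= k) :
  infinite_biosphere (vtx k) (vedge k) (vbirth k) /\
  (forall S : vtx k -> Prop,
     ICCR_maximal (vtx k) (vedge k) S <->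
     exists l, 1 <= l <= k /\ forall w, S w <-> S_ell k l w) /\
  (forall l m, 1 <= l <= k -> 1 <= m <= k -> l <> m ->
     ~ (forall w, S_ell k l w <-> S_ell k m w)) /\
  (forall l m, 1 <= l <= k -> 1 <= m <= k ->
     gen_equiv (vtx k) (vedge k) (S_ell k l) (S_ell k m)).
Proof.
  assert (h1 : 1 <= 1) by lia.
  split; [|split; [|split]].
  - split; [|split; [|split]].
    + intros v w [h _]. unfold vbirth. apply lt_INR. lia.
    + intro r. apply finite_bound with (Z.to_nat (up r)). intros v Hv. unfold vbirth in Hv.
      destruct (archimed r) as [ha _]. rewrite INR_IZR_INZ in Hv.
      assert (Z.of_nat (fst (proj1_sig v)) < up r)%Z by (apply lt_IZR; lra). lia.
    + intro v. apply finite_bound with (fst (proj1_sig v) + 2). intros w [h _]. lia.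
    + apply infinite_unb. intro N. assert (h: 1 <= S N) by lia.
      exists (mkv k (S N) 1 h (le_n 1) hk). simpl; split; auto; lia.
  - intros S; split.
    + intros [_ [HI Hmax]]. pose proof HI as HI'. destruct HI' as (_&_&HCA&_).
      destruct HCA as [v [Sv Hv]]. destruct (vbounds k v) as (hv1&hv2&hv3).
      exists (snd (proj1_sig v)). split; [lia|].
      pose proof (S_ell_root k _ (mkv k 1 _ h1 hv2 hv3) eq_refl) as R.
      set (x := mkv k 1 _ h1 hv2 hv3) in *.
      assert (HvS : S_ell k (snd (proj1_sig v)) v).
      { apply R. destruct (Nat.eq_dec (fst (proj1_sig v)) 1) as [e|e].
        - left. apply vext. simpl. apply injective_projections; simpl; auto.
        - right. apply (desc_suff k (fst (proj1_sig v) - 2)); unfold x; cbn [mkv proj1_sig fst snd]; lia. }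
      assert (Hsub : forall w, S w -> S_ell k (snd (proj1_sig v)) w).
      { intros w Sw. destruct (classic (w = v)) as [->|ne]; auto.
        specialize (Hv w Sw ne). apply R. right. apply R in HvS. unfold desc in *.
        destruct HvS as [e|HvS]; [rewrite e in Hv; auto| eapply t_trans; eauto]. }
      assert (Hl : 1 <= snd (proj1_sig v) <= k) by lia.
      pose proof (Hmax _ (S_ell_ICCR k _ Hl) Hsub). intro w; split; auto.
    + intros [l [hl HS]].
      assert (S = S_ell k l) by (extensionality w; apply propositional_extensionality; apply HS).
      subst S. destruct hl as [h2 h3] eqn:Ehl.
      pose proof (S_ell_root k l (mkv k 1 l h1 h2 h3) eq_refl) as R.
      set (x := mkv k 1 l h1 h2 h3) in *.
      split; [exists x; apply R; left; auto|]. split; [apply S_ell_ICCR; auto|].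
      intros T HT Hsub w Tw. destruct HT as (_&_&[r [Tr Hr]]&_).
      assert (Tx : T x) by (apply Hsub, R; left; auto).
      assert (r = x).
      { destruct (classic (x = r)) as [e|ne]; [auto|].
        exfalso; apply (no_desc_first k l x r eq_refl (Hr x Tx ne)). }
      subst r. apply R. destruct (classic (w = x)); [left|right; apply Hr]; auto.
  - intros l m [hl2 hl3] [hm2 hm3] hne Heq.
    pose proof (S_ell_root k l (mkv k 1 l h1 hl2 hl3) eq_refl) as Rl.
    pose proof (S_ell_root k m (mkv k 1 m h1 hm2 hm3) eq_refl) as Rm.
    assert (H : S_ell k l (mkv k 1 l h1 hl2 hl3)) by (apply Rl; left; auto).
    apply Heq, Rm in H. destruct H as [e|d].
    + apply (f_equal (@proj1_sig _ _)) in e; simpl in e. injection e; lia.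
    + exact (no_desc_first k l (mkv k 1 l h1 hl2 hl3) _ eq_refl d).
  - intros l m [hl2 hl3] [hm2 hm3].
    pose proof (S_ell_root k l (mkv k 1 l h1 hl2 hl3) eq_refl) as Rl.
    pose proof (S_ell_root k m (mkv k 1 m h1 hm2 hm3) eq_refl) as Rm.
    split; [|split].
    + apply infinite_unb. intro N. assert (h: 1 <= N + 2) by lia.
      exists (mkv k (N+2) l h hl2 hl3). split; [|cbn [mkv proj1_sig fst snd]; lia].
      apply Rl; right; apply (desc_suff k N); cbn [mkv proj1_sig fst snd]; lia.
    + apply infinite_unb. intro N. assert (h: 1 <= N + 2) by lia.
      exists (mkv k (N+2) m h hm2 hm3). split; [|cbn [mkv proj1_sig fst snd]; lia].
      apply Rm; right; apply (desc_suff k N); cbn [mkv proj1_sig fst snd]; lia.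
    + apply finite_bound with (k+1).
      intros v [[G1 nG2]|[G2 nG1]]; destruct (le_lt_dec (k+1) (fst (proj1_sig v))) as [h|h]; auto; exfalso.
      * apply nG2, gen_all, Rm. right. apply desc_far. cbn [mkv proj1_sig fst snd]. lia.
      * apply nG1, gen_all, Rl. right. apply desc_far. cbn [mkv proj1_sig fst snd]. lia.
Qed.
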